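(* Let $m$ be a natural number with $m>3$. If there exists a natural number $n$ such that the $n$-th term $G(n,m)$ of the Goodstein sequence $G(m)$ is $0$, then there is some $k<n$ such that $G(k,m)<G(k-1,m)$.
   Context: For a natural number base $b>1$, the hereditary representation $m\langle b\rangle$ of $m$ is $\sum_{i=0}^{l} a_i b^{i}$ with $0\le a_i<b$, $a_l\ne0$, each exponent itself written in hereditary representation in base $b$, recursively. $m\langle b\rangle''$ is obtained by syntactically replacing every $b$ by $b+1$ in $m\langle b\rangle$. The Goodstein sequence $G(m)=\{m, m''-1, (m''-1)''-1,\dots\}$ starts from $m$ in base $2$; its $n$-th term is $G(n,m)$, with $G(1,m)=m$ in base $2$, $G(k,m)$ written in base $k+1$, and $G(k+1,m)=G(k,m)\langle k+1\rangle''-1$. *)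

(* Defs.v *)
From mathcomp Require Import all_boot.
Set Implicit Arguments. Unset Strict Implicit. Unset Printing Implicit Defensive.

Definition digit (b n i : nat) : nat := (n %/ b ^ i) %% b.

Fixpoint hbump_fuel (fuel b n : nat) : nat :=
  match fuel with
  | 0 => 0
  | f.+1 => sumn [seq (if digit b n i is 0 then 0
                   else digit b n i * (b.+1) ^ (hbump_fuel f b i)) | i <- iota 0 n.+1]
  end.

(* m<b>'' : replace every b by b+1 in the hereditary base-b representation.
   Fuel n.+1 suffices for b >= 2 (nonzero digits only at exponents i < n). *)
Definition hbump (b n : nat) : nat := hbump_fuel n.+1 b n.

(* goodstein m k = G(k, m) for k >= 1; G(1,m)=m (base 2),
   G(k+1,m) = G(k,m)<k+1>'' - 1.  Index 0 is a dummy value (= m). *)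
Fixpoint goodstein (m k : nat) : nat :=
  match k with
  | 0 => m
  | k'.+1 => if k' is 0 then m else hbump k'.+1 (goodstein m k') - 1
  end.

(* Main.v *)
Require Import Defs.
From mathcomp Require Import all_boot.

Lemma sumn_map_ge (F : nat -> nat) (s : seq nat) t :
  t \in s -> F t <= sumn [seq F i | i <- s].
Proof.
elim: s => [|a s IH] //=; rewrite inE => /orP [/eqP -> | /IH H].
  exact: leq_addr.
by apply: (leq_trans H); exact: leq_addl.
Qed.

Lemma digit_top b y : 1 < b -> 0 < y ->
  0 < digit b y (trunc_log b y) /\ trunc_log b y <= y.
Proof.
move=> b1 y0; have H1 := trunc_logP b1 y0; have H2 := trunc_log_ltn y b1.
have Hd : y %/ b ^ trunc_log b y < b.
  rewrite ltn_divLR ?expn_gt0 ?(ltnW b1) //; rewrite expnSr in H2; by rewrite mulnC.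
split.
  rewrite /digit modn_small // divn_gt0 ?expn_gt0 ?(ltnW b1) //.
apply: leq_trans H1; apply: ltnW; exact: ltn_expl.
Qed.

Lemma hbump_term f b y : 1 < b -> 0 < y ->
  digit b y (trunc_log b y) * (b.+1) ^ (hbump_fuel f b (trunc_log b y))
    <= hbump_fuel f.+1 b y.
Proof.
move=> b1 y0; have [Hd Ht] := digit_top b y b1 y0.
set t := trunc_log b y.
have Hm : t \in iota 0 y.+1 by rewrite mem_iota.
have := sumn_map_ge (fun i => if digit b y i is 0 then 0 else digit b y i * b.+1 ^ hbump_fuel f b i) (iota 0 y.+1) t Hm.
move=> H; apply: leq_trans H; rewrite /=.
by case: (digit b y t) Hd.
Qed.

Lemma hbump_pos f b y : 1 < b -> 0 < y -> 0 < hbump_fuel f.+1 b y.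
Proof.
move=> b1 y0; apply: leq_trans (hbump_term f b y b1 y0).
have [Hd _] := digit_top b y b1 y0.
by rewrite muln_gt0 Hd expn_gt0.
Qed.

Lemma hbump_ge2 b x : 1 < b -> 1 < x -> 1 < hbump b x.
Proof.
move=> b1 x1; rewrite /hbump.
have x0 : 0 < x by apply: ltnW.
apply: leq_trans (hbump_term x b x b1 x0).
have [Hd _] := digit_top b x b1 x0.
case Ht: (trunc_log b x) => [|t].
  rewrite /digit expn0 divn1 modn_small; first by apply: leq_trans x1 (leq_pmulr _ _); rewrite expn_gt0.
  have := trunc_log_ltn x b1; by rewrite Ht expn1.
case: x x1 x0 Hd Ht => [|[|x]] // _ _ Hd Ht.
rewrite -Ht; apply: leq_trans (leq_pmull _ Hd).
have := hbump_pos x.+1 b t.+1 b1 (isT : 0 < t.+1); rewrite -Ht => Hp.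
apply: (@leq_trans (b.+1 ^ 1)); first by rewrite expn1 ltnS ltnW.
exact: leq_pexp2l.
Qed.

Lemma descent_or m j : 0 < j ->
  (exists k, 2 <= k <= j /\ goodstein m k < goodstein m k.-1) \/ m <= goodstein m j.
Proof.
elim: j => [|j IH] // _.
case: j IH => [|j] IH; first by right.
case: (IH isT) => [[k [/andP [Hk1 Hk2] Hk]] | Hm].
  by left; exists k; rewrite Hk1 /= (leq_trans Hk2).

case: (ltnP (goodstein m j.+2) (goodstein m j.+1)) => H.
  by left; exists j.+2; split; rewrite ?leqnn.
by right; apply: leq_trans H.
Qed.

Theorem lemma1 (m : nat) : 3 < m ->
  forall n : nat, goodstein m n = 0 ->
    exists k : nat, 2 <= k < n /\ goodstein m k < goodstein m k.-1.
Proof.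
move=> m3 [|[|p]] /=; try by move=> H; rewrite H in m3.
move=> Hz.
have Hle : goodstein m p.+1 <= 1.
  case: (leqP (goodstein m p.+1) 1) => // H.
  have := hbump_ge2 p.+2 _ (isT : 1 < p.+2) H.
  by move: Hz; case: (hbump _ _) => [|[|?]].
case: (descent_or m p.+1 (isT : 0 < p.+1)) => [[k [/andP [H1 H2] H3]] | Hm].
  by exists k; rewrite H1 /= ltnS H2.
by have := leq_trans m3 (leq_trans Hm Hle).
Qed.
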